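(* Let $\delta\in(0,1)$, let $X\subset\mathbb{R}_+$ be a Borel set with $0\in X$ and $\bar x=\sup X<\infty$, and let $0<x_0\le\bar x$. For $x\in[0,1]$ define $$q^*(x)=\frac{2(1-\delta)}{4-2\delta+x-\sqrt{x(x+8)}},\qquad \rho(x)=\frac12+\frac18\left(x+\sqrt{x(x+8)}\right).$$ Let $\bar q$ be the stationary decision rule with constant stopping probability $q^*(x_0/\bar x)$ (it stops with that probability after every history in which all alternatives $x_1,\dots,x_t$ equal $0$, and stops with probability $1$ after any history containing a nonzero alternative). Then, with $\mathcal B_X=\{F_{(z,\sigma)}:z\in X,\sigma\in[0,1]\}$: (a) $\bar q$ attains the performance ratio $\rho(x_0/\bar x)>1/2$, i.e. $R_{\bar q}(x_0,\mathcal B_X)=\rho(x_0/\bar x)>1/2$; (b) if $x_0/\bar x\le\delta^2/(2-\delta)$, then $\bar q$ is dynamically robust for $(x_0,\mathcal B_X)$.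
   Context: Sequential search model. Fix a discount factor $\delta\in(0,1)$, a Borel set $X\subset\mathbb{R}_+$ with $0\in X$, and an outside option $x_0>0$. Let $\mathcal F_X$ be the set of Borel probability distributions on $X$ with finite mean (''environments''); a set of feasible environments is any $\mathcal F\subset\mathcal F_X$. A history is $h_t=(x_0,x_1,\dots,x_t)$, $t\ge 0$, $x_i\in X$; its best-so-far alternative is $y_t=\max\{x_0,\dots,x_t\}$; $\mathcal H(x_0)$ is the set of all such histories. A decision rule $p$ assigns to each history $h$ a stopping probability $p(h)\in[0,1]$. Given an environment $F$ and a history $h_t$, the future alternatives are i.i.d. with law $F$; at each round $s\ge t$ the individual stops with probability $p(h_s)$ (otherwise she observes the next alternative), and stopping at round $s$ yields $\delta^{s-t}y_s$ (never stopping yields $0$). $U_p(F,h_t)$ is the expected payoff, and $V(F,h)=\sup_pU_p(F,h)$. A prior is a finitely supported probability distribution $\mu$ on $\mathcal F$; $\Delta(\mathcal F)$ is the set of priors, each $F$ identified with the point mass on it. An environment or prior is consistent with $h_t$ if $x_1,\dots,x_t$ occurs with positive probability under it; $\mathcal F(h)$, $\Delta(\mathcal F(h))$ denote the consistent ones. For consistent $\mu$, $U_p(\mu,h)=\sum_F\mu(F\mid h)U_p(F,h)$ with $\mu(\cdot\mid h)$ the Bayesian posterior, and $V(\mu,h)=\sup_pU_p(\mu,h)$. The performance ratio is $R_p(x_0,\mathcal F)=\inf_{h\in\mathcal H(x_0)}\inf_{\mu\in\Delta(\mathcal F(h))}U_p(\mu,h)/V(\mu,h)$, $R^*(x_0,\mathcal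 F)=\sup_pR_p(x_0,\mathcal F)$ over all decision rules, and $p$ is dynamically robust if $R_p(x_0,\mathcal F)=R^*(x_0,\mathcal F)$. A binary environment $F_{(z,\sigma)}$ is the lottery giving $0$ with probability $1-\sigma$ and $z$ with probability $\sigma$. *)

(* Defs.v *)
From Stdlib Require Import Reals Lra List.
From Coquelicot Require Import Coquelicot.
Import ListNotations.
Open Scope R_scope.

Inductive borel : (R -> Prop) -> Prop :=
  | borel_interval (a b : R) : borel (fun x => a < x < b)
  | borel_compl (A : R -> Prop) : borel A -> borel (fun x => ~ A x)
  | borel_union (A : nat -> R -> Prop) :
      (forall n, borel (A n)) -> borel (fun x => exists n, A n x).

(* A history h_t = (x_0, x_1, ..., x_t) is the list [x_0; x_1; ...; x_t]. *)
Definition history := list R.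

(* Best-so-far alternative y_t = max {x_0,...,x_t} (all entries are >= 0). *)
Definition best (h : history) : R := fold_right Rmax 0 h.

Definition history_in (X : R -> Prop) (x0 : R) (h : history) : Prop :=
  exists xs, h = x0 :: xs /\ List.Forall X xs.

(* Decision rules: stopping probability for every history. *)
Definition rule := history -> R.
Definition valid_rule (p : rule) : Prop := forall h, 0 <= p h <= 1.

(* Binary environment F_(z,sigma) represented by the pair (z, sigma). *)
Definition env := (R * R)%type.
Definition in_BX (X : R -> Prop) (e : env) : Prop :=
  X (fst e) /\ 0 <= snd e <= 1.

Definition pmass (e : env) (x : R) : R :=
  (if Req_EM_T x (fst e) then snd e else 0)
  + (if Req_EM_T x 0 then 1 - snd e else 0).

(* Probability of the alternatives x_1..x_t of h under e. *)
Definition lik (e : env) (h : history) : R :=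
  fold_right (fun x r => pmass e x * r) 1 (tl h).

Definition consistent (e : env) (h : history) : Prop := 0 < lik e h.

(* W n h = expected discounted payoff from stopping exactly n rounds after h. *)
Fixpoint W (delta : R) (p : rule) (e : env) (n : nat) (h : history) : R :=
  match n with
  | O => p h * best h
  | S n' => (1 - p h) * delta *
            (snd e * W delta p e n' (h ++ [fst e])
             + (1 - snd e) * W delta p e n' (h ++ [0]))
  end.

Definition U (delta : R) (p : rule) (e : env) (h : history) : R :=
  Series (fun n => W delta p e n h).

(* Finitely supported priors: lists of (weight, environment). *)
Definition prior := list (R * env).

Definition prior_on (X : R -> Prop) (h : history) (mu : prior) : Prop :=
  mu <> nil /\
  List.Forall (fun we => 0 < fst we /\ in_BX X (snd we) /\ consistent (snd we) h) mu /\
  fold_right (fun we s => fst we + s) 0 mu = 1.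

(* U_p(mu,h) = sum_F mu(F|h) U_p(F,h), with the Bayesian posterior. *)
Definition Uprior (delta : R) (p : rule) (mu : prior) (h : history) : R :=
  fold_right (fun we s => fst we * lik (snd we) h * U delta p (snd we) h + s) 0 mu
  / fold_right (fun we s => fst we * lik (snd we) h + s) 0 mu.

Definition Vprior (delta : R) (mu : prior) (h : history) : R :=
  real (Lub_Rbar (fun u => exists p, valid_rule p /\ u = Uprior delta p mu h)).

Definition perf (delta : R) (X : R -> Prop) (x0 : R) (p : rule) : R :=
  real (Glb_Rbar (fun r => exists h mu,
     history_in X x0 h /\ prior_on X h mu /\
     r = Uprior delta p mu h / Vprior delta mu h)).

Definition Rstar (delta : R) (X : R -> Prop) (x0 : R) : R :=
  real (Lub_Rbar (fun r => exists p, valid_rule p /\ r = perf delta X x0 p)).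

Definition dyn_robust (delta : R) (X : R -> Prop) (x0 : R) (p : rule) : Prop :=
  perf delta X x0 p = Rstar delta X x0.

Definition qstar (delta x : R) : R :=
  2 * (1 - delta) / (4 - 2 * delta + x - sqrt (x * (x + 8))).

Definition rho (x : R) : R :=
  1 / 2 + 1 / 8 * (x + sqrt (x * (x + 8))).

Definition is_zero (x : R) : bool := if Req_EM_T x 0 then true else false.

Definition qbar (delta x0 xbar : R) : rule :=
  fun h => if forallb is_zero (tl h) then qstar delta (x0 / xbar) else 1.

(* Main.v *)
Require Import Defs.
From Stdlib Require Import Reals Lra List Lia Psatz Classical.
From Coquelicot Require Import Coquelicot.
Import ListNotations.
Open Scope R_scope.

Lemma best_cons x h : best (x :: h) = Rmax x (best h).
Proof. reflexivity. Qed.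

Lemma best_nonneg h : 0 <= best h.
Proof. induction h as [|x h IH]; rewrite ?best_cons; simpl.
 - unfold best; simpl; lra.
 - unfold Rmax; destruct Rle_dec; lra. Qed.

Lemma best_app1 h a : 0 <= a -> best (h ++ [a]) = Rmax (best h) a.
Proof. intros Ha. induction h as [|x h IH].
 - unfold best; simpl. rewrite Rmax_left by lra. rewrite Rmax_right; lra.
 - simpl app. rewrite !best_cons, IH. apply Rmax_assoc. Qed.

Lemma Series_zero : Series (fun _ => 0) = 0.
Proof. rewrite (Series_ext _ (fun n => 0 * (fun _ => 0) n)) by (intros; simpl; ring).
 rewrite (Series_scal_l 0 (fun _ => 0)). ring. Qed.

Section WS.
Variables (delta : R) (p : rule) (e : env).
Hypothesis Hd : 0 < delta < 1.
Hypothesis Hp : valid_rule p.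
Hypothesis Hs : 0 <= snd e <= 1.
Hypothesis Hz : 0 <= fst e.

Lemma W_nonneg n : forall h, 0 <= W delta p e n h.
Proof. induction n as [|n IH]; intros h; simpl.
 - pose proof (Hp h); pose proof (best_nonneg h); nra.
 - pose proof (Hp h). pose proof (IH (h ++ [fst e])). pose proof (IH (h ++ [0])).
   apply Rmult_le_pos; [nra|]. nra. Qed.

Lemma W_bound n : forall h, W delta p e n h <= delta ^ n * Rmax (best h) (fst e).
Proof. induction n as [|n IH]; intros h; simpl.
 - pose proof (Hp h); pose proof (best_nonneg h).
   pose proof (Rmax_l (best h) (fst e)). nra.
 - pose proof (Hp h). pose proof (IH (h ++ [fst e])) as H1. pose proof (IH (h ++ [0])) as H2.
   rewrite best_app1 in H1, H2 by lra.
   rewrite <- Rmax_assoc, (Rmax_left (fst e) (fst e)) in H1 by lra.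
   replace (Rmax (Rmax (best h) 0) (fst e)) with (Rmax (best h) (fst e)) in H2.
   2:{ rewrite (Rmax_left (best h) 0); auto. pose proof (best_nonneg h); lra. }
   pose proof (W_nonneg n (h ++ [fst e])). pose proof (W_nonneg n (h ++ [0])).
   set (B := delta ^ n * Rmax (best h) (fst e)) in *.
   assert (0 <= B). { unfold B. apply Rmult_le_pos. apply pow_le; lra.
     pose proof (Rmax_r (best h) (fst e)); lra. }
   assert (snd e * W delta p e n (h ++ [fst e]) + (1 - snd e) * W delta p e n (h ++ [0]) <= B) by nra.
   assert (0 <= (1 - p h) * delta) by nra.
   assert ((1 - p h) * delta <= delta) by nra.
   set (S := snd e * W delta p e n (h ++ [fst e]) + (1 - snd e) * W delta p e n (h ++ [0])) in *.
   apply Rle_trans with (delta * B); [| unfold B; right; ring].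
   apply Rle_trans with ((1 - p h) * delta * B).
   apply Rmult_le_compat_l; lra. apply Rmult_le_compat_r; lra. Qed.

Lemma ex_series_geomB (B : R) : ex_series (fun n => B * delta ^ n).
Proof. apply ex_series_scal_l with (c := B) (a := fun n => delta ^ n).
 exists (/ (1 - delta)). apply is_series_geom. rewrite Rabs_right; lra. Qed.

Lemma ex_series_W h : ex_series (fun n => W delta p e n h).
Proof. apply (@ex_series_le R_AbsRing R_CompleteNormedModule _ (fun n => Rmax (best h) (fst e) * delta ^ n)).
 - intros n. change norm with Rabs. pose proof (W_nonneg n h). pose proof (W_bound n h).
   rewrite Rabs_right by lra. lra.
 - apply ex_series_geomB. Qed.

Lemma U_rec h : U delta p e h = p h * best h + (1 - p h) * delta *
   (snd e * U delta p e (h ++ [fst e]) + (1 - snd e) * U delta p e (h ++ [0])).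
Proof. unfold U at 1. rewrite Series_incr_1 by apply ex_series_W. simpl W at 1.
 rewrite (Series_ext _ (fun k => ((1 - p h) * delta) * ((snd e * W delta p e k (h ++ [fst e])) + ((1 - snd e) * W delta p e k (h ++ [0]))))) by (intros; reflexivity).
 rewrite Series_scal_l. rewrite Series_plus.
 2:{ apply ex_series_scal_l with (c := snd e) (a := fun k => W delta p e k (h ++ [fst e])). apply ex_series_W. }
 2:{ apply ex_series_scal_l with (c := 1 - snd e) (a := fun k => W delta p e k (h ++ [0])). apply ex_series_W. }
 rewrite !Series_scal_l. unfold U. ring. Qed.

Lemma U_nonneg h : 0 <= U delta p e h.
Proof. unfold U. apply Rle_trans with (Series (fun _ => 0)).
 - rewrite Series_zero; lra.
 - apply Series_le. intros; split; [lra| apply W_nonneg]. apply ex_series_W. Qed.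

Lemma U_le h : U delta p e h <= Rmax (best h) (fst e) / (1 - delta).
Proof. unfold U. apply Rle_trans with (Series (fun n => Rmax (best h) (fst e) * delta ^ n)).
 - apply Series_le. intros n; split. apply W_nonneg. pose proof (W_bound n h); lra.
   apply ex_series_geomB.
 - rewrite (Series_scal_l _ (fun n => delta ^ n)). rewrite (is_series_unique (fun n => delta ^ n) (/ (1 - delta))).
   unfold Rdiv; lra. apply is_series_geom. rewrite Rabs_right; lra. Qed.
End WS.

Lemma lim_le_zero a K c : 0 <= c < 1 -> (forall n, a <= K * c ^ n) -> a <= 0.
Proof. intros Hc H. destruct (Rle_dec a 0) as [|Ha]; auto. exfalso.
 assert (HK : 0 < K). { specialize (H O). simpl in H. lra. }
 destruct (pow_lt_1_zero c) with (y := a / K) as [N HN].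
 rewrite Rabs_right; lra. apply Rdiv_lt_0_compat; lra.
 specialize (HN N (le_n _)). specialize (H N). rewrite Rabs_right in HN.
 2:{ apply Rle_ge, pow_le; lra. }
 apply (Rmult_lt_compat_l K) in HN; auto. replace (K * (a / K)) with a in HN by (field; lra). lra. Qed.

Lemma is_zero_0 : is_zero 0 = true.
Proof. unfold is_zero. destruct Req_EM_T; congruence. Qed.
Lemma is_zero_nz z : z <> 0 -> is_zero z = false.
Proof. intros. unfold is_zero. destruct Req_EM_T; congruence. Qed.

Lemma best_allzero xs : forallb is_zero xs = true -> best xs = 0.
Proof. induction xs as [|x xs IH]; intros H. reflexivity. simpl in H.
 apply andb_prop in H as [H1 H2]. unfold is_zero in H1. destruct Req_EM_T; try discriminate.
 subst. rewrite best_cons, IH by auto. apply Rmax_left; lra. Qed.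

Definition inclass (z : R) (xs : list R) := List.Forall (fun x => x = 0 \/ x = z) xs.

Lemma best_inclass z xs : 0 <= z -> inclass z xs -> best xs <= z.
Proof. intros Hz H. induction H as [|x xs Hx Hxs IH]. unfold best; simpl; lra.
 rewrite best_cons. apply Rmax_lub; auto. destruct Hx; lra. Qed.

Lemma inclass_app z xs a : inclass z xs -> (a = 0 \/ a = z) -> inclass z (xs ++ [a]).
Proof. intros. apply List.Forall_app; split; auto. Qed.

Lemma geom_contract (P : list R -> Prop) (f : list R -> R) c K :
  0 <= c < 1 -> (forall xs, P xs -> P (xs ++ [0])) ->
  (forall xs, P xs -> Rabs (f xs) <= K) ->
  (forall xs, P xs -> f xs = c * f (xs ++ [0])) -> forall xs, P xs -> f xs = 0.
Proof. intros Hc HP HK Hf.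
 assert (Hn : forall n xs, P xs -> Rabs (f xs) <= K * c ^ n).
 { induction n as [|n IH]; intros xs Hxs. simpl. rewrite Rmult_1_r. auto.
   rewrite Hf by auto. rewrite Rabs_mult, Rabs_right by lra. simpl.
   specialize (IH _ (HP _ Hxs)). nra. }
 intros xs Hxs. assert (Rabs (f xs) <= 0) by (apply (lim_le_zero _ K c); auto).
 pose proof (Rabs_pos (f xs)). apply Rabs_eq_0. lra. Qed.

Section Bound.
Variables (delta : R) (p : rule) (e : env) (x0 : R).
Hypothesis Hd : 0 < delta < 1.
Hypothesis Hp : valid_rule p.
Hypothesis Hs : 0 <= snd e <= 1.
Hypothesis Hz : 0 <= fst e.
Hypothesis Hx0 : 0 < x0.

Definition Mv := Rmax x0 (fst e).
Definition V0 := Rmax x0 (delta * snd e * Mv / (1 - delta * (1 - snd e))).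
Definition Phi (xs : list R) := if forallb is_zero xs then V0 else Mv.

Lemma Phi_ge_x0 xs : x0 <= Phi xs.
Proof. unfold Phi, V0, Mv; destruct forallb; apply Rmax_l. Qed.

Lemma bound_step xs : inclass (fst e) xs ->
  p (x0 :: xs) * best (x0 :: xs) + (1 - p (x0 :: xs)) * delta *
  (snd e * Phi (xs ++ [fst e]) + (1 - snd e) * Phi (xs ++ [0])) <= Phi xs.
Proof. intros Hc. pose proof (Hp (x0 :: xs)) as Hpp.
 set (pp := p (x0 :: xs)) in *.
 assert (HM : x0 <= Mv) by apply Rmax_l.
 assert (HMz : fst e <= Mv) by apply Rmax_r.
 assert (Hden : 0 < 1 - delta * (1 - snd e)) by nra.
 assert (HV0 : delta * snd e * Mv <= V0 * (1 - delta * (1 - snd e))).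
 { unfold V0. pose proof (Rmax_r x0 (delta * snd e * Mv / (1 - delta * (1 - snd e)))).
   apply Rle_trans with (delta * snd e * Mv / (1 - delta * (1 - snd e)) * (1 - delta * (1 - snd e))).
   right; field; lra. apply Rmult_le_compat_r; lra. }
 assert (HV0x : x0 <= V0) by apply Rmax_l.
 unfold Phi at 1 2 3. rewrite !forallb_app. simpl forallb. rewrite is_zero_0.
 destruct (forallb is_zero xs) eqn:E; simpl andb.
 - rewrite best_cons, best_allzero, Rmax_left by (auto; lra).
   destruct (Req_dec (fst e) 0) as [Hz0|Hz0].
   + rewrite Hz0, is_zero_0. simpl andb.
     assert (delta * (snd e * V0 + (1 - snd e) * V0) <= V0) by nra.
     assert (0 <= 1 - pp) by lra.
     apply Rle_trans with (pp * V0 + (1 - pp) * V0); [|lra].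
     apply Rplus_le_compat. apply Rmult_le_compat_l; lra.
     rewrite Rmult_assoc. apply Rmult_le_compat_l; lra.
   + rewrite is_zero_nz by auto. simpl.
     assert (delta * (snd e * Mv + (1 - snd e) * V0) <= V0) by nra.
     assert (0 <= 1 - pp) by lra.
     apply Rle_trans with (pp * V0 + (1 - pp) * V0); [|lra].
     apply Rplus_le_compat. apply Rmult_le_compat_l; lra.
     rewrite Rmult_assoc. apply Rmult_le_compat_l; lra.
 - rewrite best_cons. assert (Rmax x0 (best xs) <= Mv).
   { apply Rmax_lub; auto. pose proof (best_inclass _ _ Hz Hc). lra. }
   pose proof (best_nonneg (x0 :: xs)). rewrite best_cons in *.
   assert (0 <= Mv) by lra.
   assert (delta * (snd e * Mv + (1 - snd e) * Mv) <= Mv) by nra.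
   assert (0 <= 1 - pp) by lra.
   apply Rle_trans with (pp * Mv + (1 - pp) * Mv); [|lra].
   apply Rplus_le_compat. apply Rmult_le_compat_l; lra.
   rewrite Rmult_assoc. apply Rmult_le_compat_l; lra. Qed.

Lemma U_le_Phi xs : inclass (fst e) xs -> U delta p e (x0 :: xs) <= Phi xs.
Proof.
 set (K := Mv / (1 - delta)).
 assert (HK : 0 <= K). { unfold K. apply Rdiv_le_0_compat. unfold Mv. pose proof (Rmax_l x0 (fst e)); lra. lra. }
 assert (H : forall n xs, inclass (fst e) xs -> U delta p e (x0 :: xs) <= Phi xs + K * delta ^ n).
 { induction n as [|n IH]; intros ys Hys.
   - simpl. pose proof (U_le delta p e Hd Hp Hs Hz (x0 :: ys)).
     assert (Rmax (best (x0 :: ys)) (fst e) <= Mv).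
     { rewrite best_cons. unfold Mv. apply Rmax_lub. apply Rmax_lub. apply Rmax_l.
       pose proof (best_inclass _ _ Hz Hys). pose proof (Rmax_r x0 (fst e)); lra. apply Rmax_r. }
     assert (Rmax (best (x0 :: ys)) (fst e) / (1 - delta) <= K).
     { unfold K. unfold Rdiv. apply Rmult_le_compat_r; auto. left; apply Rinv_0_lt_compat; lra. }
     pose proof (Phi_ge_x0 ys). lra.
   - rewrite U_rec by auto. simpl app.
     pose proof (IH _ (inclass_app _ _ _ Hys (or_intror eq_refl))) as H1.
     pose proof (IH _ (inclass_app _ _ _ Hys (or_introl eq_refl))) as H2.
     pose proof (bound_step ys Hys) as H3. pose proof (Hp (x0 :: ys)).
     set (pp := p (x0 :: ys)) in *.
     assert (0 <= (1 - pp) * delta) by nra.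
     assert (0 <= K * delta ^ n) by (apply Rmult_le_pos; auto; apply pow_le; lra).
     assert (snd e * U delta p e (x0 :: ys ++ [fst e]) + (1 - snd e) * U delta p e (x0 :: ys ++ [0])
        <= snd e * Phi (ys ++ [fst e]) + (1 - snd e) * Phi (ys ++ [0]) + K * delta ^ n) by nra.
     simpl pow.
     assert ((1 - pp) * delta * (K * delta ^ n) <= K * (delta * delta ^ n)).
     { assert (0 <= pp * (delta * (K * delta ^ n))) by (apply Rmult_le_pos; [lra|]; apply Rmult_le_pos; lra). nra. }
     match goal with |- _ <= _ + K * ?D => idtac end.
     set (A := snd e * U delta p e (x0 :: ys ++ [fst e]) + (1 - snd e) * U delta p e (x0 :: ys ++ [0])) in *.
     set (B := snd e * Phi (ys ++ [fst e]) + (1 - snd e) * Phi (ys ++ [0])) in *.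
     assert ((1 - pp) * delta * A <= (1 - pp) * delta * (B + K * delta ^ n)) by (apply Rmult_le_compat_l; lra).
     lra. }
 intros Hxs. assert (U delta p e (x0 :: xs) - Phi xs <= 0).
 { apply (lim_le_zero _ K delta). lra. intros n. specialize (H n xs Hxs). lra. }
 lra. Qed.
End Bound.

Definition qrule (q : R) : rule := fun h => if forallb is_zero (tl h) then q else 1.

Lemma qrule_valid q : 0 <= q <= 1 -> valid_rule (qrule q).
Proof. intros Hq h. unfold qrule. destruct forallb; lra. Qed.

Lemma allzero_app0 xs : forallb is_zero xs = true -> forallb is_zero (xs ++ [0]) = true.
Proof. intros H. rewrite forallb_app, H. simpl. rewrite is_zero_0. reflexivity. Qed.

Section Q.
Variables (delta q : R) (e : env) (x0 : R).
Hypothesis Hd : 0 < delta < 1.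
Hypothesis Hq : 0 <= q <= 1.
Hypothesis Hs : 0 <= snd e <= 1.
Hypothesis Hz : 0 <= fst e.
Hypothesis Hx0 : 0 < x0.

Lemma U_qrule_nz xs : forallb is_zero xs = false ->
  U delta (qrule q) e (x0 :: xs) = best (x0 :: xs).
Proof. intros H. rewrite U_rec; auto using qrule_valid. unfold qrule; simpl tl. rewrite H. ring. Qed.

Lemma U_qrule_bound xs : forallb is_zero xs = true ->
  Rabs (U delta (qrule q) e (x0 :: xs)) <= Rmax x0 (fst e) / (1 - delta).
Proof. intros H. pose proof (U_nonneg delta (qrule q) e Hd (qrule_valid q Hq) Hs Hz (x0 :: xs)).
 pose proof (U_le delta (qrule q) e Hd (qrule_valid q Hq) Hs Hz (x0 :: xs)).
 rewrite best_cons, best_allzero, (Rmax_left x0 0) in H1 by (auto; lra).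
 rewrite Rabs_right; lra. Qed.

Lemma U_qrule_z0 xs : fst e = 0 -> forallb is_zero xs = true ->
  U delta (qrule q) e (x0 :: xs) = q * x0 / (1 - (1 - q) * delta).
Proof. intros Hz0 Hxs.
 assert (Hden : 0 < 1 - (1 - q) * delta) by nra.
 set (u := q * x0 / (1 - (1 - q) * delta)).
 assert (Hu : u = q * x0 + (1 - q) * delta * u) by (unfold u; field; lra).
 cut (U delta (qrule q) e (x0 :: xs) - u = 0). lra.
 apply (geom_contract (fun xs => forallb is_zero xs = true) (fun xs => U delta (qrule q) e (x0 :: xs) - u)
   ((1 - q) * delta) (Rmax x0 (fst e) / (1 - delta) + Rabs u)); auto.
 - split; nra.
 - apply allzero_app0.
 - intros ys Hys. eapply Rle_trans. apply Rabs_triang. rewrite Rabs_Ropp.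
   pose proof (U_qrule_bound ys Hys). lra.
 - intros ys Hys. rewrite U_rec at 1; auto using qrule_valid.
   unfold qrule at 1 2; simpl tl. rewrite Hys. rewrite best_cons, best_allzero, (Rmax_left x0 0) by (auto; lra).
   rewrite Hz0. simpl app. rewrite Hu at 1. ring. Qed.

Lemma U_qrule_znz xs : fst e <> 0 -> forallb is_zero xs = true ->
  U delta (qrule q) e (x0 :: xs) =
  (q * x0 + (1 - q) * delta * snd e * Rmax x0 (fst e)) / (1 - (1 - q) * delta * (1 - snd e)).
Proof. intros Hz0 Hxs.
 assert (Hden : 0 < 1 - (1 - q) * delta * (1 - snd e)).
 { assert (0 <= (1 - q) * (1 - snd e) <= 1) by nra. nra. }
 set (u := (q * x0 + (1 - q) * delta * snd e * Rmax x0 (fst e)) / (1 - (1 - q) * delta * (1 - snd e))).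
 assert (Hu : u = q * x0 + (1 - q) * delta * (snd e * Rmax x0 (fst e) + (1 - snd e) * u)) by (unfold u; field; lra).
 cut (U delta (qrule q) e (x0 :: xs) - u = 0). lra.
 apply (geom_contract (fun xs => forallb is_zero xs = true) (fun xs => U delta (qrule q) e (x0 :: xs) - u)
   ((1 - q) * delta * (1 - snd e)) (Rmax x0 (fst e) / (1 - delta) + Rabs u)); auto.
 - split. apply Rmult_le_pos; nra. lra.
 - apply allzero_app0.
 - intros ys Hys. eapply Rle_trans. apply Rabs_triang. rewrite Rabs_Ropp.
   pose proof (U_qrule_bound ys Hys). lra.
 - intros ys Hys. rewrite U_rec at 1; auto using qrule_valid.
   unfold qrule at 1 2; simpl tl. rewrite Hys. rewrite best_cons, best_allzero, (Rmax_left x0 0) by (auto; lra).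
   simpl app. rewrite U_qrule_nz.
   2:{ rewrite forallb_app, Hys. simpl. rewrite is_zero_nz; auto. }
   rewrite best_cons, best_app1, best_allzero, (Rmax_right 0 (fst e)) by (auto; lra).
   rewrite Hu at 1. ring. Qed.
End Q.

Lemma rho_facts x : 0 < x <= 1 ->
  (2 * rho x - 1) ^ 2 = rho x * x /\ 1 / 2 < rho x <= 1.
Proof. intros Hx. unfold rho. set (s := sqrt (x * (x + 8))).
 assert (Hs2 : s * s = x * (x + 8)) by (unfold s; apply sqrt_sqrt; nra).
 assert (Hs0 : 0 <= s) by (unfold s; apply sqrt_pos).
 assert (Hs3 : s <= 3) by nra.
 assert (Hsp : 0 < s) by nra.
 split. nra. split; nra. Qed.

Lemma qstar_eq delta x : 0 < delta < 1 -> 0 < x <= 1 ->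
  qstar delta x = rho x * (1 - delta) / (1 - delta * rho x).
Proof. intros Hd Hx. destruct (rho_facts x Hx) as [_ [H1 H2]].
 unfold qstar. assert (Hr : 0 < 1 - delta * rho x) by nra.
 unfold rho in *. set (s := sqrt (x * (x + 8))) in *.
 assert (Hs2 : s * s = x * (x + 8)) by (unfold s; apply sqrt_sqrt; nra).
 assert (Hs0 : 0 <= s) by (unfold s; apply sqrt_pos).
 assert (Hs3 : s <= 3) by nra.
 assert (HD : 4 - 2 * delta + x - s = 2 * (1 - delta * (1 / 2 + 1 / 8 * (x + s))) / (1 / 2 + 1 / 8 * (x + s))).
 { field_simplify_eq. nra. lra. }
 rewrite HD. field. lra. Qed.

Lemma key_ineq delta rho x q sg M x0 :
  0 < delta < 1 -> 1 / 2 < rho <= 1 -> (2 * rho - 1) ^ 2 = rho * x ->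
  q = rho * (1 - delta) / (1 - delta * rho) -> 0 <= sg <= 1 -> 0 <= M -> x * M <= x0 ->
  rho * delta * sg * M * (1 - (1 - q) * delta * (1 - sg)) <=
  (q * x0 + (1 - q) * delta * sg * M) * (1 - delta * (1 - sg)).
Proof. intros Hd Hr Hx Hq Hs HM Hx0.
 assert (Hr1 : 0 < 1 - delta * rho) by nra.
 set (L := 1 - delta + delta * sg).
 assert (Hid : (1 - delta * rho) * ((q * x0 + (1 - q) * delta * sg * M) * (1 - delta * (1 - sg))
    - rho * delta * sg * M * (1 - (1 - q) * delta * (1 - sg))) =
    rho * (1 - delta) * (x0 - x * M) * L + M * ((2 * rho - 1) * (1 - delta) - (1 - rho) * delta * sg) ^ 2
    + M * (1 - delta) * L * (rho * x - (2 * rho - 1) ^ 2)).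
 { rewrite Hq. unfold L. field. lra. }
 rewrite Hx, Rminus_diag, Rmult_0_r, Rplus_0_r in Hid.
 assert (0 <= L) by (unfold L; nra).
 assert (0 <= rho * (1 - delta) * (x0 - x * M) * L).
 { apply Rmult_le_pos; [|lra]. apply Rmult_le_pos; nra. }
 assert (0 <= M * ((2 * rho - 1) * (1 - delta) - (1 - rho) * delta * sg) ^ 2).
 { apply Rmult_le_pos; auto. apply pow2_ge_0. }
 nra. Qed.

Lemma first_ineq delta rho q sg M x0 :
  0 < delta < 1 -> 1 / 2 < rho <= 1 ->
  q = rho * (1 - delta) / (1 - delta * rho) -> 0 <= sg <= 1 -> 0 <= x0 <= M ->
  rho * x0 * (1 - (1 - q) * delta * (1 - sg)) <= q * x0 + (1 - q) * delta * sg * M.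
Proof. intros Hd Hr Hq Hs HM.
 assert (Hr1 : 0 < 1 - delta * rho) by nra.
 assert (Hq1 : q * (1 - delta * rho) = rho * (1 - delta)) by (rewrite Hq; field; lra).
 assert (Hq0 : q <= 1).
 { assert (rho * (1 - delta) <= 1 - delta * rho) by nra.
   apply (Rmult_le_reg_r (1 - delta * rho)); nra. }
 assert (0 <= (1 - q) * delta * sg * (M - x0)).
 { repeat apply Rmult_le_pos; lra. }
 assert (0 <= sg * (1 - q) * delta * (1 - rho) * x0).
 { repeat apply Rmult_le_pos; lra. }
 nra. Qed.

Lemma best_inclass_nz z xs : 0 <= z -> inclass z xs -> forallb is_zero xs = false -> best xs = z.
Proof. intros Hz H. induction H as [|x xs Hx Hxs IH]; intros Hf; simpl in Hf. discriminate.
 rewrite best_cons. apply Bool.andb_false_iff in Hf. destruct Hx as [Hx|Hx]; subst x.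
 - destruct Hf as [Hf|Hf]. rewrite is_zero_0 in Hf; discriminate.
   rewrite IH by auto. apply Rmax_right; lra.
 - pose proof (best_inclass _ _ Hz Hxs). apply Rmax_left; lra. Qed.

Lemma pmass_nz e x : pmass e x <> 0 -> x = 0 \/ x = fst e.
Proof. unfold pmass. destruct Req_EM_T; destruct Req_EM_T; auto. intros H; lra. Qed.

Lemma lik_inclass e x0 xs : lik e (x0 :: xs) <> 0 -> inclass (fst e) xs.
Proof. unfold lik; simpl tl. induction xs as [|x xs IH]; simpl; intros H. constructor.
 constructor. apply pmass_nz. intros E; rewrite E in H; apply H; ring.
 apply IH. intros E; rewrite E in H; apply H; ring. Qed.

Lemma lemA delta x0 xbar e xs :
  0 < delta < 1 -> 0 < x0 <= xbar -> 0 <= fst e <= xbar -> 0 <= snd e <= 1 ->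
  inclass (fst e) xs ->
  rho (x0 / xbar) * Phi delta e x0 xs <= U delta (qbar delta x0 xbar) e (x0 :: xs).
Proof. intros Hd Hx He Hs Hc.
 assert (Hx1 : 0 < x0 / xbar <= 1).
 { split. apply Rdiv_lt_0_compat; lra. apply (Rmult_le_reg_r xbar). lra. field_simplify; lra. }
 destruct (rho_facts _ Hx1) as [Hsq Hr].
 set (r := rho (x0 / xbar)) in *.
 pose proof (qstar_eq delta _ Hd Hx1) as Hq. fold r in Hq.
 set (q := qstar delta (x0 / xbar)) in *.
 assert (Hq01 : 0 <= q <= 1).
 { rewrite Hq. assert (0 < 1 - delta * r) by nra. split. apply Rdiv_le_0_compat; nra.
   apply (Rmult_le_reg_r (1 - delta * r)); auto. field_simplify; nra. }
 change (qbar delta x0 xbar) with (qrule q).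
 assert (HM : x0 <= Mv e x0) by apply Rmax_l.
 assert (HMz : fst e <= Mv e x0) by apply Rmax_r.
 assert (HMb : Mv e x0 <= xbar) by (apply Rmax_lub; lra).
 unfold Phi. destruct (forallb is_zero xs) eqn:E.
 - destruct (Req_dec (fst e) 0) as [Hz0|Hz0].
   + rewrite U_qrule_z0 by (auto; lra).
     assert (HV : V0 delta e x0 = x0).
     { unfold V0, Mv. rewrite Hz0, (Rmax_left x0 0) by lra. apply Rmax_left.
       assert (0 < 1 - delta * (1 - snd e)) by nra.
       apply (Rmult_le_reg_r (1 - delta * (1 - snd e))); auto. field_simplify; nra. }
     rewrite HV. assert (0 < 1 - (1 - q) * delta) by nra.
     assert (Hqq : q = r * (1 - (1 - q) * delta)).
     { rewrite Hq. field. nra. }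
     right. rewrite Hqq at 1. field. lra.
   + rewrite U_qrule_znz by (auto; lra). fold (Mv e x0).
     assert (Hden : 0 < 1 - (1 - q) * delta * (1 - snd e)).
     { assert (0 <= (1 - q) * (1 - snd e) <= 1) by nra. nra. }
     assert (Hden2 : 0 < 1 - delta * (1 - snd e)) by nra.
     unfold V0. apply Rmax_case.
     * apply (Rmult_le_reg_r (1 - (1 - q) * delta * (1 - snd e))); auto.
       replace ((q * x0 + (1 - q) * delta * snd e * Mv e x0) / (1 - (1 - q) * delta * (1 - snd e)) * (1 - (1 - q) * delta * (1 - snd e))) with (q * x0 + (1 - q) * delta * snd e * Mv e x0) by (field; lra).
       pose proof (first_ineq delta r q (snd e) (Mv e x0) x0 Hd Hr Hq Hs (conj (Rlt_le _ _ (proj1 Hx)) HM)).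
       lra.
     * assert (Hxm : (x0 / xbar) * Mv e x0 <= x0).
       { apply (Rmult_le_reg_r xbar). lra. field_simplify; try lra.
         assert (0 < x0) by lra. nra. }
       pose proof (key_ineq delta r (x0 / xbar) q (snd e) (Mv e x0) x0 Hd Hr Hsq Hq Hs ltac:(lra) Hxm).
       apply (Rmult_le_reg_r ((1 - (1 - q) * delta * (1 - snd e)) * (1 - delta * (1 - snd e)))).
       apply Rmult_lt_0_compat; auto.
       replace (r * (delta * snd e * Mv e x0 / (1 - delta * (1 - snd e))) *
          ((1 - (1 - q) * delta * (1 - snd e)) * (1 - delta * (1 - snd e))))
         with (r * delta * snd e * Mv e x0 * (1 - (1 - q) * delta * (1 - snd e))) by (field; lra).
       replace ((q * x0 + (1 - q) * delta * snd e * Mv e x0) / (1 - (1 - q) * delta * (1 - snd e)) *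
          ((1 - (1 - q) * delta * (1 - snd e)) * (1 - delta * (1 - snd e))))
         with ((q * x0 + (1 - q) * delta * snd e * Mv e x0) * (1 - delta * (1 - snd e))) by (field; lra).
       lra.
 - rewrite U_qrule_nz by (auto; lra). rewrite best_cons, (best_inclass_nz _ _ (proj1 He) Hc E).
   fold (Mv e x0). assert (0 <= Mv e x0) by lra. nra. Qed.

Lemma lub_facts (S : R -> Prop) B y0 : S y0 -> (forall y, S y -> y <= B) ->
  (forall y, S y -> y <= real (Lub_Rbar S)) /\ real (Lub_Rbar S) <= B.
Proof. intros H0 HB. pose proof (Lub_Rbar_correct S) as [Hub Hl].
 assert (HB' : is_ub_Rbar S B) by (intros y Hy; simpl; apply HB; auto).
 specialize (Hl _ HB').
 destruct (Lub_Rbar S) as [l| |] eqn:E; simpl in *.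
 - split; auto.
 - contradiction.
 - specialize (Hub y0 H0). simpl in Hub. contradiction.
Qed.

Lemma lub_max (S : R -> Prop) y0 : S y0 -> (forall y, S y -> y <= y0) -> real (Lub_Rbar S) = y0.
Proof. intros H0 HB. destruct (lub_facts S y0 y0 H0 HB) as [H1 H2].
 specialize (H1 y0 H0). lra. Qed.

Lemma glb_min (S : R -> Prop) y0 : S y0 -> (forall y, S y -> y0 <= y) -> real (Glb_Rbar S) = y0.
Proof. intros H0 HB. pose proof (Glb_Rbar_correct S) as [Hlb Hg].
 assert (HB' : is_lb_Rbar S y0) by (intros y Hy; simpl; apply HB; auto).
 specialize (Hg _ HB'). specialize (Hlb _ H0).
 destruct (Glb_Rbar S) as [l| |]; simpl in *; try contradiction. lra. Qed.

Lemma glb_pos_lb (S : R -> Prop) : 0 < real (Glb_Rbar S) -> forall y, S y -> real (Glb_Rbar S) <= y.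
Proof. intros Hp y Hy. pose proof (Glb_Rbar_correct S) as [Hlb _].
 specialize (Hlb _ Hy). destruct (Glb_Rbar S) as [l| |]; simpl in *; try lra. Qed.

Definition num (h : history) (g : env -> R) (mu : prior) :=
  fold_right (fun we s => fst we * lik (snd we) h * g (snd we) + s) 0 mu.
Definition den (h : history) (mu : prior) :=
  fold_right (fun we s => fst we * lik (snd we) h + s) 0 mu.

Lemma Uprior_eq delta p mu h : Uprior delta p mu h = num h (fun e => U delta p e h) mu / den h mu.
Proof. reflexivity. Qed.

Lemma num_le h g1 g2 mu :
  List.Forall (fun we => 0 <= fst we * lik (snd we) h /\ g1 (snd we) <= g2 (snd we)) mu ->
  num h g1 mu <= num h g2 mu.
Proof. induction 1 as [|we mu [H1 H2] _ IH]; simpl. lra.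
 apply Rplus_le_compat; auto. apply Rmult_le_compat_l; auto. Qed.

Lemma num_scal h c g mu : num h (fun e => c * g e) mu = c * num h g mu.
Proof. unfold num. induction mu as [|we mu IH]; simpl. ring. rewrite IH. ring. Qed.

Lemma num_const h c mu : num h (fun _ => c) mu = c * den h mu.
Proof. unfold num, den. induction mu as [|we mu IH]; simpl. ring. rewrite IH. ring. Qed.

Lemma den_pos h mu : mu <> nil -> List.Forall (fun we => 0 < fst we * lik (snd we) h) mu -> 0 < den h mu.
Proof. intros Hn H. destruct H as [|we mu H1 H2]. congruence.
 assert (0 <= den h mu). { clear Hn H1. induction H2 as [|we' mu' H3 H4 IH]. unfold den; simpl; lra.
   unfold den in *; simpl. lra. }
 unfold den in *; simpl. lra. Qed.

Lemma lik_nonneg e h : 0 <= snd e <= 1 -> 0 <= lik e h.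
Proof. intros Hs. unfold lik. induction (tl h) as [|x l IH]; simpl. lra.
 apply Rmult_le_pos; auto. unfold pmass. destruct Req_EM_T; destruct Req_EM_T; lra. Qed.

Lemma qstar_01 delta x : 0 < delta < 1 -> 0 < x <= 1 -> 0 <= qstar delta x <= 1.
Proof. intros Hd Hx. rewrite qstar_eq by auto. destruct (rho_facts x Hx) as [_ Hr].
 assert (0 < 1 - delta * rho x) by nra. split. apply Rdiv_le_0_compat; nra.
 apply (Rmult_le_reg_r (1 - delta * rho x)); auto. field_simplify; nra. Qed.

Lemma prior_facts X h mu : prior_on X h mu ->
  List.Forall (fun we => 0 < fst we /\ in_BX X (snd we) /\ consistent (snd we) h) mu.
Proof. intros [_ [H _]]. exact H. Qed.

Lemma ratio_lb delta X xbar x0 xs mu :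
  0 < delta < 1 -> (forall x, X x -> 0 <= x) -> is_lub X xbar -> 0 < x0 <= xbar ->
  prior_on X (x0 :: xs) mu ->
  rho (x0 / xbar) <= Uprior delta (qbar delta x0 xbar) mu (x0 :: xs) / Vprior delta mu (x0 :: xs).
Proof. intros Hd HX Hlub Hx Hmu.
 set (h := x0 :: xs).
 assert (Hx1 : 0 < x0 / xbar <= 1).
 { split. apply Rdiv_lt_0_compat; lra. apply (Rmult_le_reg_r xbar). lra. field_simplify; lra. }
 destruct (rho_facts _ Hx1) as [_ Hr]. set (r := rho (x0 / xbar)) in *.
 pose proof (qstar_01 delta _ Hd Hx1) as Hq01.
 assert (Hval : valid_rule (qbar delta x0 xbar)) by (apply qrule_valid; auto).
 pose proof (prior_facts _ _ _ Hmu) as HF.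
 assert (HF2 : List.Forall (fun we => 0 < fst we * lik (snd we) h /\ 0 <= fst (snd we) <= xbar
     /\ 0 <= snd (snd we) <= 1 /\ inclass (fst (snd we)) xs) mu).
 { eapply Forall_impl; [|exact HF]. intros [w e] [Hw [[HXe Hs] Hc]]. simpl in *.
   unfold consistent in Hc. split. apply Rmult_lt_0_compat; auto.
   split. split. apply HX; auto. apply (proj1 Hlub); auto. split; auto.
   apply (lik_inclass e x0 xs). lra. }
 set (NP := num h (fun e => Phi delta e x0 xs) mu).
 set (D := den h mu).
 assert (HD : 0 < D). { apply den_pos. destruct Hmu; auto. eapply Forall_impl; [|exact HF2]. intros a Ha; apply Ha. }
 assert (Hup : forall p, valid_rule p -> Uprior delta p mu h <= NP / D).
 { intros p Hp. rewrite Uprior_eq. unfold Rdiv. apply Rmult_le_compat_r. left; apply Rinv_0_lt_compat; auto.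
   apply num_le. eapply Forall_impl; [|exact HF2]. intros [w e] [H1 [H2 [H3 H4]]]. simpl in *.
   split. lra. apply U_le_Phi; auto; lra. }
 assert (Hlo : r * (NP / D) <= Uprior delta (qbar delta x0 xbar) mu h).
 { rewrite Uprior_eq. replace (r * (NP / D)) with (num h (fun e => r * Phi delta e x0 xs) mu / D)
     by (unfold NP; rewrite num_scal; field; lra).
   unfold Rdiv. apply Rmult_le_compat_r. left; apply Rinv_0_lt_compat; auto.
   apply num_le. eapply Forall_impl; [|exact HF2]. intros [w e] [H1 [H2 [H3 H4]]]. simpl in *.
   split. lra. apply lemA; auto. }
 assert (HNP : x0 * D <= NP).
 { unfold D. rewrite <- num_const. apply num_le. eapply Forall_impl; [|exact HF2].
   intros [w e] [H1 [H2 [H3 H4]]]. simpl in *. split. lra. apply Phi_ge_x0. }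
 assert (HNPD : x0 <= NP / D). { apply (Rmult_le_reg_r D); auto. field_simplify; lra. }
 destruct (lub_facts (fun u => exists p, valid_rule p /\ u = Uprior delta p mu h) (NP / D)
   (Uprior delta (qbar delta x0 xbar) mu h)) as [HV1 HV2].
 exists (qbar delta x0 xbar); auto. intros y [p [Hp ->]]. auto.
 fold (Vprior delta mu h) in HV1, HV2.
 specialize (HV1 _ (ex_intro _ (qbar delta x0 xbar) (conj Hval eq_refl))).
 assert (HVp : 0 < Vprior delta mu h) by nra.
 apply (Rmult_le_reg_r (Vprior delta mu h)); auto. field_simplify; [|lra]. nra. Qed.

Lemma Uprior_single delta p e h : lik e h <> 0 -> Uprior delta p [(1, e)] h = U delta p e h.
Proof. intros H. unfold Uprior. simpl. field. auto. Qed.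

Lemma Vsingle delta e x0 xs p0 :
  0 < delta < 1 -> 0 <= fst e -> 0 <= snd e <= 1 -> 0 < x0 -> inclass (fst e) xs ->
  lik e (x0 :: xs) <> 0 -> valid_rule p0 ->
  U delta p0 e (x0 :: xs) <= Vprior delta [(1, e)] (x0 :: xs) <= Phi delta e x0 xs.
Proof. intros Hd Hz Hs Hx Hc Hl Hp0.
 destruct (lub_facts (fun u => exists p, valid_rule p /\ u = Uprior delta p [(1, e)] (x0 :: xs))
   (Phi delta e x0 xs) (Uprior delta p0 [(1, e)] (x0 :: xs))) as [H1 H2].
 - exists p0; auto.
 - intros y [p [Hp ->]]. rewrite Uprior_single by auto. apply U_le_Phi; auto.
 - fold (Vprior delta [(1, e)] (x0 :: xs)) in H1, H2. split; auto.
   rewrite <- Uprior_single with (p := p0) by auto. apply H1. exists p0; auto. Qed.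

Lemma prior_single X e h : X (fst e) -> 0 <= snd e <= 1 -> 0 < lik e h -> prior_on X h [(1, e)].
Proof. intros H1 H2 H3. split. discriminate. split.
 constructor; [|constructor]. simpl. split. lra. split. split; auto. auto.
 simpl. ring. Qed.

Lemma partA delta X xbar x0 :
  0 < delta < 1 -> (forall x, X x -> 0 <= x) -> X 0 -> is_lub X xbar -> 0 < x0 <= xbar ->
  perf delta X x0 (qbar delta x0 xbar) = rho (x0 / xbar).
Proof. intros Hd HX H0 Hlub Hx.
 assert (Hx1 : 0 < x0 / xbar <= 1).
 { split. apply Rdiv_lt_0_compat; lra. apply (Rmult_le_reg_r xbar). lra. field_simplify; lra. }
 unfold perf. apply glb_min.
 - exists [x0], [(1, (0, 0))]. split. exists []. split; auto.
   assert (Hlik : lik (0, 0) [x0] = 1) by reflexivity.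
   split. apply prior_single; simpl; auto; lra.
   rewrite Uprior_single by lra.
   pose proof (qstar_01 delta _ Hd Hx1) as Hq01.
   change (qbar delta x0 xbar) with (qrule (qstar delta (x0 / xbar))).
   rewrite U_qrule_z0; simpl; auto; try lra.
   destruct (Vsingle delta (0, 0) x0 [] (qrule 1) Hd) as [HV1 HV2]; simpl; auto; try lra.
   constructor. apply qrule_valid; lra.
   rewrite U_qrule_z0 in HV1; simpl; auto; try lra.
   assert (HP : Phi delta (0, 0) x0 [] = x0).
   { unfold Phi, V0, Mv. simpl. rewrite (Rmax_left x0 0) by lra. apply Rmax_left.
     replace (delta * 0 * x0 / (1 - delta * (1 - 0))) with 0 by (field; lra). lra. }
   rewrite HP in HV2. replace (1 * x0 / (1 - (1 - 1) * delta)) with x0 in HV1 by (field; lra).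
   assert (HV : Vprior delta [(1, (0, 0))] [x0] = x0) by lra. rewrite HV.
   rewrite qstar_eq by auto. destruct (rho_facts _ Hx1) as [_ Hr].
   set (r := rho (x0 / xbar)) in *. field. repeat split; intro Hc; nra.
 - intros y [h [mu [[xs [-> Hxs]] [Hmu ->]]]]. apply (ratio_lb delta X); auto. Qed.

Lemma dyn_contra delta c a r (p f u : nat -> R) :
  0 < delta < 1 -> 0 <= c < delta -> 0 <= a < r -> r < 1 ->
  0 < (r - a) / (1 - a) * (1 - delta) / (1 - r) - (1 - c) + (delta - c) * ((r - a) / (1 - a)) ->
  (forall t, 0 <= p t <= 1) ->
  (forall t, f t = p t + (1 - p t) * delta * f (S t)) ->
  (forall t, r <= f t <= 1) -> (forall t, r <= u t <= 1) ->
  (forall t, u t <= p t * a + (1 - p t) * (1 - c + c * u (S t))) -> False.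
Proof. intros Hd Hc Ha Hr HE Hp Hf Hfb Hub Hu.
 set (Mm := (r - a) / (1 - a)).
 assert (HMm : 0 < Mm < 1).
 { unfold Mm. split. apply Rdiv_lt_0_compat; lra.
   apply (Rmult_lt_reg_r (1 - a)). lra. field_simplify; lra. }
 set (R0 := 1 - r). assert (HR0 : 0 < R0 < 1) by (unfold R0; lra).
 set (kap := Mm / R0).
 set (E := kap * (1 - delta) - (1 - c) + (delta - c) * Mm).
 assert (HEp : 0 < E). { unfold E, kap, R0. fold Mm in HE. replace (Mm / (1 - r) * (1 - delta)) with (Mm * (1 - delta) / (1 - r)) by (field; lra). lra. }
 set (F := fun t => 1 - f t).
 set (G := fun t => (u t - a) / (1 - a)).
 assert (HF : forall t, F t = (1 - p t) * (1 - delta + delta * F (S t))).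
 { intros t. unfold F. rewrite (Hf t) at 1. ring. }
 assert (HG : forall t, G t <= (1 - p t) * (1 - c + c * G (S t))).
 { intros t. unfold G. apply (Rmult_le_reg_r (1 - a)). lra.
   replace ((u t - a) / (1 - a) * (1 - a)) with (u t - a) by (field; lra).
   replace ((1 - p t) * (1 - c + c * ((u (S t) - a) / (1 - a))) * (1 - a))
     with ((1 - p t) * ((1 - c) * (1 - a) + c * (u (S t) - a))) by (field; lra).
   specialize (Hu t). pose proof (Hp t). nra. }
 assert (HFb : forall t, 0 <= F t <= R0). { intros t. unfold F, R0. specialize (Hfb t). lra. }
 assert (HGb : forall t, Mm <= G t <= 1).
 { intros t. unfold G, Mm. specialize (Hub t). split.
   - unfold Rdiv. apply Rmult_le_compat_r. left; apply Rinv_0_lt_compat; lra. lra.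
   - apply (Rmult_le_reg_r (1 - a)). lra. field_simplify; lra. }
 assert (Hpl : forall t, Mm <= 1 - p t).
 { intros t. specialize (HG t). pose proof (HGb t). pose proof (HGb (S t)). pose proof (Hp t).
   assert (0 <= 1 - c + c * G (S t) <= 1) by nra. nra. }
 assert (HFl : forall t, Mm * (1 - delta) <= F t).
 { intros t. rewrite HF. pose proof (Hpl t). pose proof (HFb (S t)). pose proof (HMm).
   assert (1 - delta <= 1 - delta + delta * F (S t)) by nra. nra. }
 set (s := fun t => G t / F t).
 assert (HFp : forall t, 0 < F t). { intros t. pose proof (HFl t). nra. }
 assert (Hs0 : forall t, 0 <= s t). { intros t. unfold s. pose proof (HGb t). pose proof (HFp t).
   apply Rdiv_le_0_compat; lra. }
 assert (Hsup : forall t, s t <= 1 / (Mm * (1 - delta))).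
 { intros t. unfold s. pose proof (HGb t). pose proof (HFl t). pose proof (HFp t).
   assert (0 < Mm * (1 - delta)) by nra.
   unfold Rdiv. apply Rle_trans with (1 * / F t).
   apply Rmult_le_compat_r; [left; apply Rinv_0_lt_compat|]; lra.
   apply Rmult_le_compat_l; [lra|]. apply Rinv_le_contravar; lra. }
 assert (Hstep : forall t, s t + E <= s (S t)).
 { intros t. unfold s.
   set (F' := F (S t)). set (G' := G (S t)).
   set (X := 1 - c + c * G'). set (Y := 1 - delta + delta * F').
   pose proof (HFp (S t)) as HF'. fold F' in HF'. pose proof (HFb (S t)) as HF'b. fold F' in HF'b.
   pose proof (HGb (S t)) as HG'b. fold G' in HG'b.
   assert (HY : 0 < Y <= 1) by (unfold Y; nra).
   assert (Hst : G t / F t <= X / Y).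
   { rewrite HF. fold F' Y. pose proof (Hpl t). pose proof (HG t) as HGt. fold G' X in HGt.
     apply (Rmult_le_reg_r ((1 - p t) * Y)). nra.
     replace (G t / ((1 - p t) * Y) * ((1 - p t) * Y)) with (G t) by (field; split; lra).
     replace (X / Y * ((1 - p t) * Y)) with ((1 - p t) * X) by (field; lra). lra. }
   assert (Hk : kap * F' <= G').
   { unfold kap. apply (Rmult_le_reg_r R0). lra.
     replace (Mm / R0 * F' * R0) with (Mm * F') by (field; lra). nra. }
   assert (Hkey : X / Y + E <= G' / F').
   { apply (Rmult_le_reg_r (Y * F')). nra.
     replace ((X / Y + E) * (Y * F')) with (X * F' + E * Y * F') by (field; lra).
     replace (G' / F' * (Y * F')) with (G' * Y) by (field; lra).
     assert (Hid : G' * Y - X * F' - E * Y * F' =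
        (G' - kap * F') * (1 - delta) + (delta - c) * F' * (G' - Mm) + E * F' * (1 - Y)).
     { unfold X, Y, E. ring. }
     assert (0 <= (G' - kap * F') * (1 - delta)) by nra.
     assert (0 <= (delta - c) * F' * (G' - Mm)).
     { apply Rmult_le_pos; [apply Rmult_le_pos|]; lra. }
     assert (0 <= E * F' * (1 - Y)). { apply Rmult_le_pos; [apply Rmult_le_pos|]; lra. }
     lra. }
   lra. }
 assert (Hn : forall n, s O + INR n * E <= s n).
 { induction n as [|n IH]. simpl. lra. rewrite S_INR. specialize (Hstep n). lra. }
 destruct (INR_unbounded (1 / (Mm * (1 - delta)) / E)) as [n Hn1].
 specialize (Hn n). specialize (Hsup n). specialize (Hs0 O).
 assert (INR n * E > 1 / (Mm * (1 - delta))).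
 { apply (Rmult_gt_compat_r E) in Hn1; auto.
   replace (1 / (Mm * (1 - delta)) / E * E) with (1 / (Mm * (1 - delta))) in Hn1 by (field; split; nra). lra. }
 lra. Qed.

Lemma rho_cond delta x : 0 < delta < 1 -> 0 < x <= 1 -> x <= delta ^ 2 / (2 - delta) ->
  rho x * (2 - delta) <= 1.
Proof. intros Hd Hx Hc. destruct (rho_facts x Hx) as [Hsq Hr]. set (r := rho x) in *.
 set (t := 2 * r - 1).
 assert (Ht : 0 < t) by (unfold t; lra).
 assert (H1 : x * (2 - delta) <= delta ^ 2).
 { apply (Rmult_le_compat_r (2 - delta)) in Hc; [|lra].
   replace (delta ^ 2 / (2 - delta) * (2 - delta)) with (delta ^ 2) in Hc by (field; lra). lra. }
 assert (H2 : t ^ 2 * (2 - delta) <= r * delta ^ 2).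
 { unfold t. rewrite Hsq. replace (r * x * (2 - delta)) with (r * (x * (2 - delta))) by ring.
   apply Rmult_le_compat_l; lra. }
 assert (H3 : ((2 - delta) * t - delta) * (2 * t + delta) <= 0).
 { replace r with ((1 + t) / 2) in H2 by (unfold t; field). nra. }
 assert ((2 - delta) * t - delta <= 0).
 { destruct (Rle_dec ((2 - delta) * t - delta) 0); auto. nra. }
 unfold t in *. nra. Qed.

Lemma choose_params delta X xbar x0 r :
  0 < delta < 1 -> is_lub X xbar -> 0 < x0 <= xbar -> x0 / xbar <= delta ^ 2 / (2 - delta) ->
  rho (x0 / xbar) < r < 1 ->
  exists z sg, X z /\ x0 < z /\ 0 < sg < 1 /\
    0 <= x0 * (1 - delta + delta * sg) / (delta * sg * z) < r /\
    0 < (r - x0 * (1 - delta + delta * sg) / (delta * sg * z)) / (1 - x0 * (1 - delta + delta * sg) / (delta * sg * z)) * (1 - delta) / (1 - r)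
        - (1 - delta * (1 - sg))
        + (delta - delta * (1 - sg)) * ((r - x0 * (1 - delta + delta * sg) / (delta * sg * z)) / (1 - x0 * (1 - delta + delta * sg) / (delta * sg * z))).
Proof. intros Hd Hlub Hx Hc Hr.
 set (x := x0 / xbar) in *.
 assert (Hx1 : 0 < x <= 1).
 { split. apply Rdiv_lt_0_compat; lra. apply (Rmult_le_reg_r xbar). lra. unfold x; field_simplify; lra. }
 destruct (rho_facts x Hx1) as [Hsq Hrho]. pose proof (rho_cond delta x Hd Hx1 Hc) as Hrc.
 set (rh := rho x) in *.
 assert (Hrh1 : rh < 1) by nra.
 assert (Hxe : x = (2 * rh - 1) ^ 2 / rh) by (rewrite Hsq; field; lra).
 set (ss := (2 * rh - 1) * (1 - delta) / ((1 - rh) * delta)).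
 assert (Hss : 0 < ss <= 1).
 { unfold ss. split. apply Rdiv_lt_0_compat; nra.
   apply (Rmult_le_reg_r ((1 - rh) * delta)). nra. field_simplify; nra. }
 set (ath := fun sg => (2 * r - 1) / r - (1 - r) ^ 2 * delta * sg / ((1 - delta) * r)).
 set (Q := fun sg => sg * ath sg - x * (1 - delta + delta * sg) / delta).
 set (k := (2 * rh - 1) / (1 - rh)).
 assert (HQs : Q ss = ss * ((r - rh) * (3 - 2 * rh + k * (2 - r - rh)) / r)).
 { unfold Q, ath, k, ss. rewrite Hxe. field. repeat split; nra. }
 assert (Hk : 0 < k) by (unfold k; apply Rdiv_lt_0_compat; lra).
 assert (HQsp : 0 < Q ss).
 { rewrite HQs. apply Rmult_lt_0_compat. lra. apply Rdiv_lt_0_compat; [|lra].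
   apply Rmult_lt_0_compat. lra. nra. }
 set (Q0 := x * (1 - delta) / delta).
 assert (HQ0 : 0 < Q0) by (unfold Q0; apply Rdiv_lt_0_compat; nra).
 set (lam := (Q0 + Q ss / 2) / (Q0 + Q ss)).
 assert (Hlam : 0 < lam < 1).
 { unfold lam. split. apply Rdiv_lt_0_compat; lra.
   apply (Rmult_lt_reg_r (Q0 + Q ss)). lra. field_simplify; lra. }
 set (s1 := lam * ss).
 assert (Hs1 : 0 < s1 < 1) by (unfold s1; nra).
 assert (HQ1 : Q ss / 2 <= Q s1).
 { set (B := (1 - r) ^ 2 * delta / ((1 - delta) * r)).
   assert (HB : 0 <= B). { unfold B. apply Rdiv_le_0_compat. apply Rmult_le_pos. apply pow2_ge_0. lra. nra. }
   assert (Hid : Q s1 = lam * Q ss - (1 - lam) * Q0 + B * lam * (1 - lam) * ss ^ 2).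
   { unfold Q, ath, s1, B, Q0. field. lra. }
   assert (Hid2 : lam * Q ss - (1 - lam) * Q0 = Q ss / 2).
   { unfold lam. field. lra. }
   assert (0 <= B * lam * (1 - lam) * ss ^ 2).
   { apply Rmult_le_pos. apply Rmult_le_pos. apply Rmult_le_pos; lra. lra. apply pow2_ge_0. }
   lra. }
 set (L := 1 - delta + delta * s1).
 assert (HQd : Q s1 = s1 * ath s1 - x * L / delta) by reflexivity.
 assert (HL : delta * s1 < L) by (unfold L; lra).
 assert (Hds : 0 < delta * s1) by nra.
 assert (Hath1 : ath s1 < (2 * r - 1) / r).
 { unfold ath. assert (0 < (1 - r) ^ 2 * delta * s1 / ((1 - delta) * r)).
   { apply Rdiv_lt_0_compat. apply Rmult_lt_0_compat. apply Rmult_lt_0_compat. nra. lra. lra. nra. } lra. }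
 assert (Hr2 : (2 * r - 1) / r < r).
 { apply (Rmult_lt_reg_r r). lra. field_simplify; nra. }
 assert (Hath0 : 0 < ath s1).
 { assert (0 < s1 * ath s1).
   { assert (0 < x * L / delta) by (apply Rdiv_lt_0_compat; [apply Rmult_lt_0_compat|]; nra).
     lra. }
   nra. }
 set (zth := x0 * L / (delta * s1 * ath s1)).
 assert (Hzth : zth < xbar).
 { unfold zth. apply (Rmult_lt_reg_r (delta * s1 * ath s1)).
   apply Rmult_lt_0_compat; nra.
   replace (x0 * L / (delta * s1 * ath s1) * (delta * s1 * ath s1)) with (x0 * L) by (field; split; nra).
   assert (Hq : 0 < s1 * ath s1 - x * L / delta) by lra.
   replace x with (x0 / xbar) in Hq by reflexivity.
   assert (0 < xbar * delta * (s1 * ath s1 - x0 / xbar * L / delta)) by (apply Rmult_lt_0_compat; nra).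
   replace (xbar * delta * (s1 * ath s1 - x0 / xbar * L / delta)) with (xbar * (delta * s1 * ath s1) - x0 * L) in H by (field; lra).
   lra. }
 assert (Hzx0 : x0 < zth).
 { unfold zth. apply (Rmult_lt_reg_r (delta * s1 * ath s1)). apply Rmult_lt_0_compat; nra.
   replace (x0 * L / (delta * s1 * ath s1) * (delta * s1 * ath s1)) with (x0 * L) by (field; split; nra).
   assert (ath s1 < 1).
   { assert ((2 * r - 1) / r < 1). { apply (Rmult_lt_reg_r r). lra. field_simplify; nra. } lra. }
   assert (0 < delta * s1) by nra.
   assert (delta * s1 * ath s1 < delta * s1) by (rewrite <- (Rmult_1_r (delta * s1)) at 2; apply Rmult_lt_compat_l; lra).
   apply Rmult_lt_compat_l; lra. }
 destruct (classic (exists z, X z /\ zth < z)) as [[z [HXz Hz]]|Hno].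
 2:{ exfalso. assert (Hub : is_upper_bound X zth).
     { intros y Hy. destruct (Rle_dec y zth) as [|Hn]; auto. exfalso. apply Hno. exists y. split; auto. lra. }
     pose proof (proj2 Hlub _ Hub). lra. }
 exists z, s1. split; auto. split. lra. split; auto.
 fold L. set (a := x0 * L / (delta * s1 * z)).
 assert (Hz0 : 0 < z) by lra.
 assert (Hdsz : 0 < delta * s1 * z) by (apply Rmult_lt_0_compat; [apply Rmult_lt_0_compat|]; lra).
 assert (Hdsa : 0 < delta * s1 * ath s1) by (apply Rmult_lt_0_compat; [apply Rmult_lt_0_compat|]; lra).
 assert (Ha0 : 0 <= a) by (unfold a; apply Rdiv_le_0_compat; [apply Rmult_le_pos|]; lra).
 assert (Hath : a < ath s1).
 { unfold a. apply (Rmult_lt_reg_r (delta * s1 * z)). auto.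
   replace (x0 * L / (delta * s1 * z) * (delta * s1 * z)) with (x0 * L) by (field; split; nra).
   unfold zth in Hz. apply (Rmult_lt_compat_r (delta * s1 * ath s1)) in Hz; auto.
   replace (x0 * L / (delta * s1 * ath s1) * (delta * s1 * ath s1)) with (x0 * L) in Hz by (field; split; nra).
   nra. }
 split. split; auto. lra.
 set (K := (1 - delta) / (1 - r) + delta * s1).
 assert (HKL : K - L = (1 - delta) * r / (1 - r)) by (unfold K, L; field; lra).
 assert (Hathe : ath s1 = (r * K - L) / (K - L)).
 { rewrite HKL. unfold ath, K, L. field. repeat split; nra. }
 assert (HE : (r - a) / (1 - a) * (1 - delta) / (1 - r) - (1 - delta * (1 - s1)) +
    (delta - delta * (1 - s1)) * ((r - a) / (1 - a)) = (K - L) * (ath s1 - a) / (1 - a)).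
 { rewrite Hathe. unfold K, L. field. repeat split; intro Hc0; nra. }
 rewrite HE. apply Rdiv_lt_0_compat. apply Rmult_lt_0_compat. rewrite HKL.
 apply Rdiv_lt_0_compat; nra. lra. lra. Qed.

Lemma repeat0_app t : repeat 0 t ++ [0] = repeat 0 (S t).
Proof. induction t as [|t IH]; simpl. reflexivity. rewrite IH. reflexivity. Qed.

Lemma allzero_repeat t : forallb is_zero (repeat 0 t) = true.
Proof. induction t as [|t IH]; simpl. reflexivity. rewrite is_zero_0, IH. reflexivity. Qed.

Lemma inclass_repeat z t : inclass z (repeat 0 t).
Proof. induction t; simpl; constructor; auto. Qed.

Lemma ForallX_repeat (X : R -> Prop) t : X 0 -> List.Forall X (repeat 0 t).
Proof. intros H. induction t; simpl; constructor; auto. Qed.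

Lemma lik_repeat e x0 t : lik e (x0 :: repeat 0 t) = pmass e 0 ^ t.
Proof. unfold lik. simpl tl. induction t as [|t IH]; simpl. reflexivity. rewrite IH. reflexivity. Qed.

Lemma partB_le delta X xbar x0 p :
  0 < delta < 1 -> (forall x, X x -> 0 <= x) -> X 0 -> is_lub X xbar -> 0 < x0 <= xbar ->
  x0 / xbar <= delta ^ 2 / (2 - delta) -> valid_rule p ->
  perf delta X x0 p <= rho (x0 / xbar).
Proof. intros Hd HX H0 Hlub Hx Hcond Hp.
 assert (Hx1 : 0 < x0 / xbar <= 1).
 { split. apply Rdiv_lt_0_compat; lra. apply (Rmult_le_reg_r xbar). lra. field_simplify; lra. }
 destruct (rho_facts _ Hx1) as [_ Hrho]. set (rh := rho (x0 / xbar)) in *.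
 destruct (Rle_dec (perf delta X x0 p) rh) as [|Hgt]; auto. exfalso.
 apply Rnot_le_lt in Hgt. set (P := perf delta X x0 p) in *.
 assert (HP : forall h mu, history_in X x0 h -> prior_on X h mu ->
    P <= Uprior delta p mu h / Vprior delta mu h).
 { intros h mu H1 H2. unfold P, perf. apply glb_pos_lb. fold (perf delta X x0 p). fold P. lra.
   exists h, mu. auto. }
 pose proof (rho_cond delta _ Hd Hx1 Hcond) as Hrc. fold rh in Hrc.
 assert (Hrh1 : rh < 1) by nra.
 set (r := Rmin P ((1 + rh) / 2)).
 assert (Hr : rh < r < 1 /\ r <= P).
 { unfold r. unfold Rmin. destruct Rle_dec; lra. }
 destruct (choose_params delta X xbar x0 r Hd Hlub Hx Hcond (proj1 Hr)) as [z [sg [HXz [Hzx [Hsg [Ha HE]]]]]].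
 set (a := x0 * (1 - delta + delta * sg) / (delta * sg * z)) in *.
 set (w := delta * sg * z / (1 - delta + delta * sg)).
 assert (Hw : 0 < w). { unfold w. apply Rdiv_lt_0_compat; [|nra]. apply Rmult_lt_0_compat; nra. }
 assert (Haw : a = x0 / w) by (unfold a, w; field; repeat split; nra).
 assert (Hxw : x0 < w).
 { assert (x0 / w < 1) by lra. apply (Rmult_lt_compat_r w) in H; auto.
   replace (x0 / w * w) with x0 in H by (field; lra). lra. }
 set (e0 := (0, 0) : env). set (e1 := (z, sg) : env).
 set (h := fun t => x0 :: repeat 0 t).
 assert (Hlik0 : forall t, lik e0 (h t) = 1).
 { intros t. unfold h. rewrite lik_repeat. unfold pmass, e0; simpl.
   destruct Req_EM_T; [|lra]. rewrite Rplus_0_l, Rminus_0_r. apply pow1. }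
 assert (Hlik1 : forall t, lik e1 (h t) = (1 - sg) ^ t).
 { intros t. unfold h. rewrite lik_repeat. unfold pmass, e1; simpl.
   destruct (Req_EM_T 0 z); [lra|]. destruct (Req_EM_T 0 0); [|lra]. f_equal. ring. }
 assert (Hhist : forall t, history_in X x0 (h t)).
 { intros t. exists (repeat 0 t). split; auto. apply ForallX_repeat; auto. }
 assert (Hpr0 : forall t, prior_on X (h t) [(1, e0)]).
 { intros t. apply prior_single; simpl; auto; try lra. rewrite Hlik0; lra. }
 assert (Hpr1 : forall t, prior_on X (h t) [(1, e1)]).
 { intros t. apply prior_single; simpl; auto; try lra. rewrite Hlik1. apply pow_lt. lra. }
 set (U0 := fun t => U delta p e0 (h t)).
 set (U1 := fun t => U delta p e1 (h t)).
 assert (HV0 : forall t, Vprior delta [(1, e0)] (h t) = x0).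
 { intros t. destruct (Vsingle delta e0 x0 (repeat 0 t) (qrule 1) Hd) as [HV1 HV2]; simpl; auto; try lra.
   apply inclass_repeat. fold (h t). rewrite Hlik0; lra. apply qrule_valid; lra.
   rewrite U_qrule_z0 in HV1; simpl; auto; try lra. 2: apply allzero_repeat.
   replace (1 * x0 / (1 - (1 - 1) * delta)) with x0 in HV1 by (field; lra).
   unfold Phi in HV2. rewrite allzero_repeat in HV2. unfold V0, Mv, e0 in HV2. simpl in HV2.
   rewrite (Rmax_left x0 0) in HV2 by lra.
   replace (delta * 0 * x0 / (1 - delta * (1 - 0))) with 0 in HV2 by (field; lra).
   rewrite Rmax_left in HV2 by lra. apply Rle_antisym; [exact HV2 | exact HV1]. }
 assert (HV1 : forall t, w <= Vprior delta [(1, e1)] (h t)).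
 { intros t. destruct (Vsingle delta e1 x0 (repeat 0 t) (qrule 0) Hd) as [HV1 HV2]; simpl; auto; try lra.
   apply inclass_repeat. fold (h t). rewrite Hlik1. apply pow_nonzero. lra. apply qrule_valid; lra.
   rewrite U_qrule_znz in HV1; simpl; auto; try lra. 2: apply allzero_repeat.
   unfold e1 in HV1; simpl in HV1.
   rewrite (Rmax_right x0 z) in HV1 by lra.
   replace ((0 * x0 + (1 - 0) * delta * sg * z) / (1 - (1 - 0) * delta * (1 - sg))) with w in HV1 by (unfold w; field; nra).
   exact HV1. }
 assert (Hf_lo : forall t, r * x0 <= U0 t).
 { intros t. pose proof (HP _ _ (Hhist t) (Hpr0 t)) as H1.
   rewrite Uprior_single, HV0 in H1 by (rewrite Hlik0; lra).
   apply (Rmult_le_compat_r x0) in H1; [|lra]. replace (U delta p e0 (h t) / x0 * x0) with (U0 t) in H1 by (unfold U0; field; lra).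
   nra. }
 assert (Hu_lo : forall t, r * w <= U1 t).
 { intros t. pose proof (HP _ _ (Hhist t) (Hpr1 t)) as H1.
   rewrite Uprior_single in H1 by (rewrite Hlik1; apply pow_nonzero; lra).
   specialize (HV1 t). set (V := Vprior delta [(1, e1)] (h t)) in *.
   apply (Rmult_le_compat_r V) in H1; [|lra]. replace (U delta p e1 (h t) / V * V) with (U1 t) in H1 by (unfold U1; field; lra).
   assert (0 < r) by lra. nra. }
 assert (Hf_hi : forall t, U0 t <= x0).
 { intros t. unfold U0, h. eapply Rle_trans. apply U_le_Phi; simpl; auto; try lra. apply inclass_repeat.
   unfold Phi. rewrite allzero_repeat. unfold V0, Mv, e0. simpl.
   rewrite (Rmax_left x0 0) by lra.
   replace (delta * 0 * x0 / (1 - delta * (1 - 0))) with 0 by (field; lra).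
   rewrite Rmax_left by lra. lra. }
 assert (Hu_hi : forall t, U1 t <= w).
 { intros t. unfold U1, h. eapply Rle_trans. apply U_le_Phi; simpl; auto; try lra. apply inclass_repeat.
   unfold Phi. rewrite allzero_repeat. unfold V0, Mv, e1. simpl.
   rewrite (Rmax_right x0 z) by lra.
   replace (delta * sg * z / (1 - delta * (1 - sg))) with w by (unfold w; field; nra).
   rewrite Rmax_right by lra. lra. }
 assert (Hrec0 : forall t, U0 t = p (h t) * x0 + (1 - p (h t)) * delta * U0 (S t)).
 { intros t. unfold U0. rewrite (U_rec delta p e0 Hd Hp); [| unfold e0; simpl; lra | unfold e0; simpl; lra].
   change (fst e0) with 0. change (snd e0) with 0.
   unfold h. simpl app. rewrite repeat0_app. rewrite best_cons, best_allzero, Rmax_left by (auto using allzero_repeat; lra).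
   ring. }
 assert (Hrec1 : forall t, U1 t <= p (h t) * x0 + (1 - p (h t)) * delta * (sg * z + (1 - sg) * U1 (S t))).
 { intros t. unfold U1. rewrite (U_rec delta p e1 Hd Hp); [| unfold e1; simpl; lra | unfold e1; simpl; lra].
   change (fst e1) with z. change (snd e1) with sg.
   unfold h. simpl app. rewrite repeat0_app. rewrite best_cons, best_allzero, (Rmax_left x0 0) by (auto using allzero_repeat; lra).
   assert (Hz1 : U delta p e1 (x0 :: repeat 0 t ++ [z]) <= z).
   { eapply Rle_trans. apply U_le_Phi; simpl; auto; try lra.
     apply inclass_app. apply inclass_repeat. right; reflexivity.
     unfold Phi. rewrite forallb_app, allzero_repeat. simpl. rewrite is_zero_nz by lra. simpl.
     unfold Mv, e1; simpl. rewrite Rmax_right; lra. }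
   pose proof (Hp (x0 :: repeat 0 t)).
   assert (0 <= (1 - p (x0 :: repeat 0 t)) * delta * sg) by (apply Rmult_le_pos; nra).
   simpl. nra. }
 apply (dyn_contra delta (delta * (1 - sg)) a r (fun t => p (h t)) (fun t => U0 t / x0) (fun t => U1 t / w)).
 - auto.
 - split; nra.
 - lra.
 - lra.
 - exact HE.
 - intros t. apply Hp.
 - intros t. rewrite Hrec0 at 1. field. lra.
 - intros t. specialize (Hf_lo t). specialize (Hf_hi t). split.
   apply (Rmult_le_reg_r x0). lra. field_simplify; lra.
   apply (Rmult_le_reg_r x0). lra. field_simplify; lra.
 - intros t. specialize (Hu_lo t). specialize (Hu_hi t). split.
   apply (Rmult_le_reg_r w). lra. field_simplify; lra.
   apply (Rmult_le_reg_r w). lra. field_simplify; lra.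
 - intros t. specialize (Hrec1 t). pose proof (Hp (h t)).
   rewrite Haw. apply (Rmult_le_reg_r w). lra.
   replace (U1 t / w * w) with (U1 t) by (field; lra).
   replace ((p (h t) * (x0 / w) + (1 - p (h t)) * (1 - delta * (1 - sg) + delta * (1 - sg) * (U1 (S t) / w))) * w)
     with (p (h t) * x0 + (1 - p (h t)) * ((1 - delta * (1 - sg)) * w + delta * (1 - sg) * U1 (S t))) by (field; lra).
   replace ((1 - delta * (1 - sg)) * w) with (delta * sg * z) by (unfold w; field; nra).
   nra. Qed.

Theorem theorem1 (delta : R) (X : R -> Prop) (xbar x0 : R) :
  0 < delta < 1 ->
  borel X ->
  (forall x, X x -> 0 <= x) ->
  X 0 ->
  is_lub X xbar ->
  0 < x0 <= xbar ->
  (perf delta X x0 (qbar delta x0 xbar) = rho (x0 / xbar) /\ rho (x0 / xbar) > 1 / 2) /\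
  (x0 / xbar <= delta ^ 2 / (2 - delta) ->
     dyn_robust delta X x0 (qbar delta x0 xbar)).
Proof. intros Hd _ HX H0 Hlub Hx.
 assert (Hx1 : 0 < x0 / xbar <= 1).
 { split. apply Rdiv_lt_0_compat; lra. apply (Rmult_le_reg_r xbar). lra. field_simplify; lra. }
 assert (HA : perf delta X x0 (qbar delta x0 xbar) = rho (x0 / xbar)) by (apply partA; auto).
 split. split; auto. destruct (rho_facts _ Hx1); lra.
 intros Hc. unfold dyn_robust, Rstar. symmetry. apply lub_max.
 - exists (qbar delta x0 xbar). split; auto. apply qrule_valid, qstar_01; auto.
 - intros y [p [Hp ->]]. rewrite HA. apply (partB_le delta X xbar x0 p); auto. Qed.
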